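(* In Setup A, fix $\tau\in\mathcal{O}$ and for $0\le i\le l-1$ define $H_{\tau,i}:M_{p^i\tau}\to M_{p^{i+1}\tau}$ by $H_{\tau,i}=F$ if $f(p^i\tau^* )\ge f(\tau^* )$ and $H_{\tau,i}=F+V'$ if $f(p^i\tau^* )<f(\tau^* )$. Assume (a) $\dim\big(\pi_\tau\circ H_{\tau,l-1}\circ\cdots\circ H_{\tau,0}(M_\tau)\big)=f(\tau^* )$, and (b) $w_{\tau'}$ is maximal for every $\tau'\in\mathcal{O}$ with $f(\tau'^* )<f(\tau^* )$. Then: (1) $H_{\tau,i}\circ\cdots\circ H_{\tau,0}(M_\tau)=M_{p^{i+1}\tau,f(\tau^* )}$ for all $0\le i\le l-1$; (2) $w_\tau$ is maximal; (3) $w_{\tau'}$ is maximal for every $\tau'\in\mathcal{O}$ with $f(\tau'^* )=f(\tau^* )$.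
   Context: Setup A. Let $k_0=\overline{\mathbb{F}}_p$ with Frobenius $\sigma$. Let $\mathcal{O}$ be a finite set of size $l$ with a cyclic permutation $\tau'\mapsto p\tau'$ (so $\mathcal{O}=\{\tau,p\tau,\dots,p^{l-1}\tau\}$ and $p^l\tau=\tau$). Fix an integer $g\ge1$ and, for each $\tau'\in\mathcal{O}$, non-negative integers $f(\tau')$, $f(\tau'^* )$ with $f(\tau')+f(\tau'^* )=g$ (the notation $f(p^i\tau^* )$ means $f((p^i\tau)^* )$). Let $M=\bigoplus_{\tau'\in\mathcal{O}}M_{\tau'}$ where $M_{\tau'}$ has $k_0$-basis $e_{\tau',1},\dots,e_{\tau',g}$; write $M_{\tau',k}=\mathrm{Span}(e_{\tau',1},\dots,e_{\tau',k})$ and $M_{\tau',a,b}=\mathrm{Span}(e_{\tau',a},\dots,e_{\tau',b})$. For each $\tau'$ fix increasing sequences $j_{\tau',1}<\dots<j_{\tau',f(\tau')}$ and $i_{\tau',1}<\dots<i_{\tau',f(\tau'^* )}$ partitioning $\{1,\dots,g\}$, and let $w_{\tau'}\in\mathrm{Sym}_g$ be given by $w_{\tau'}(j_{\tau',k})=k$, $w_{\tau'}(i_{\tau',k})=f(\tau')+k$. Let $F:M\to M$ be the $\sigma$-semilinear map with $F(e_{\tau',j})=e_{p\tau',\,w_{\tau'}(j)-f(\tau')}$ if $w_{\tau'}(j)>f(\tau')$ and $F(e_{\tau',j})=0$ otherwise. Let $V':M\to M$ be the semilinear map with $V'(e_{\tau',j})=e_{p\tau',\,f(\tau'^* )+w_{\tau'}(j)}$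 if $w_{\tau'}(j)\le f(\tau')$ and $V'(e_{\tau',j})=0$ otherwise. Let $Q_{\tau'}=\mathrm{Span}(e_{\tau',i_{\tau',k}})$, $Q^\vee_{\tau'^*}=\mathrm{Span}(e_{\tau',j_{\tau',k}})$ (so $M_{\tau'}=Q_{\tau'}\oplus Q^\vee_{\tau'^*}$), $Q=\bigoplus Q_{\tau'}$, and $\pi_{\tau'}:M_{\tau'}\to Q_{\tau'}$ the projection with kernel $Q^\vee_{\tau'^*}$. We say $w_{\tau'}$ is maximal if $i_{\tau',k}=k$ for all $1\le k\le f(\tau'^* )$, i.e. $w_{\tau'}(k)=f(\tau')+k$ for $k\le f(\tau'^* )$ and $w_{\tau'}(k)=k-f(\tau'^* )$ for $k>f(\tau'^* )$ (equivalently $\ker F\cap M_{\tau',f(\tau'^* )}=0$; this is the permutation of maximal length). *)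

(* Defs.v *)
(* Setup A of the paper, encoded as follows:
   - the orbit O = {tau, p tau, ..., p^(l-1) tau} is modelled by 'I_l, with
     the cyclic permutation tau' |-> p tau' given by ordS (i |-> i+1 mod l);
   - M_{tau'} = k^g is modelled by row vectors 'rV[k]_g; the basis vector
     e_{tau',j} (1-based j) is the unit row vector with index j-1 (0-based);
   - the partition {j_{tau',.}} / {i_{tau',.}} of {1..g} is given by the set
     J tau' of (0-based) positions j_{tau',k};
   - w0 is the 0-based version of w (w0 = w - 1). *)
From HB Require Import structures.
From mathcomp Require Import all_boot all_order all_algebra.
Set Implicit Arguments. Unset Strict Implicit. Unset Printing Implicit Defensive.
Import GRing.Theory.
Local Open Scope ring_scope.

Definition e_nat (k : nzRingType) (g n : nat) : 'rV[k]_g :=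
  \row_(m < g) ((m == n :> nat)%:R).

Definition w0 (g : nat) (J : {set 'I_g}) (f : nat) (j : 'I_g) : nat :=
  if j \in J then #|[set x in J | (x < j)%N]|
  else (f + #|[set x in ~: J | (x < j)%N]|)%N.

(* F : M_{tau'} -> M_{p tau'}, sigma-semilinear:
   F e_j = e_{w(j) - f}  if w(j) > f, and 0 otherwise (1-based) *)
Definition Fmap (k : nzRingType) (sigma : k -> k) (g : nat) (J : {set 'I_g})
  (f : nat) (v : 'rV[k]_g) : 'rV[k]_g :=
  \sum_(j < g) sigma (v 0 j) *:
     (if (f <= w0 J f j)%N then e_nat k g (w0 J f j - f) else 0).

(* V' : M_{tau'} -> M_{p tau'}, sigmaV-semilinear:
   V' e_j = e_{fs + w(j)}  if w(j) <= f, and 0 otherwise (1-based) *)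
Definition Vmap (k : nzRingType) (sigmaV : k -> k) (g : nat) (J : {set 'I_g})
  (f fs : nat) (v : 'rV[k]_g) : 'rV[k]_g :=
  \sum_(j < g) sigmaV (v 0 j) *:
     (if (w0 J f j < f)%N then e_nat k g (fs + w0 J f j) else 0).

Definition Hmap (k : nzRingType) (sigma sigmaV : k -> k) (g l : nat)
  (J : 'I_l -> {set 'I_g}) (f fs : 'I_l -> nat) (tau : 'I_l) (i : nat)
  (v : 'rV[k]_g) : 'rV[k]_g :=
  let t := iter i (@ordS l) tau in
  if (fs tau <= fs t)%N then Fmap sigma (J t) (f t) v
  else Fmap sigma (J t) (f t) v + Vmap sigmaV (J t) (f t) (fs t) v.

Fixpoint Himg (k : nzRingType) (sigma sigmaV : k -> k) (g l : nat)
  (J : 'I_l -> {set 'I_g}) (f fs : 'I_l -> nat) (tau : 'I_l) (n : nat)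
  : 'rV[k]_g -> Prop :=
  match n with
  | 0 => fun _ => True
  | S m => fun u => exists v, Himg sigma sigmaV J f fs tau m v /\
                      u = Hmap sigma sigmaV J f fs tau m v
  end.

(* pi_{tau'} : projection onto Q_{tau'} along Q^vee_{tau'^*} = span(e_j, j in J) *)
Definition proj (k : nzRingType) (g : nat) (J : {set 'I_g}) (v : 'rV[k]_g)
  : 'rV[k]_g := \row_(m < g) (if m \in J then 0 else v 0 m).

Definition dim_is (k : fieldType) (g : nat) (S : 'rV[k]_g -> Prop) (d : nat)
  : Prop :=
  exists A : 'M[k]_(d, g), row_free A /\ forall v, S v <-> (v <= A)%MS.

(* w_{tau'} is maximal (0-based form of w(k) = f + k for k <= fstar,
   w(k) = k - fstar for k > fstar) *)
Definition maximal_w (g : nat) (J : {set 'I_g}) (f fs : nat) : Prop :=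
  forall j : 'I_g,
    ((j < fs)%N -> w0 J f j = (f + j)%N) /\
    ((fs <= j)%N -> w0 J f j = (j - fs)%N).

(* Main.v *)
Require Import Defs.
From HB Require Import structures.
From mathcomp Require Import all_boot all_order all_algebra.
Import GRing.Theory.
Set Implicit Arguments. Unset Strict Implicit.
Local Open Scope ring_scope.

Lemma sum_delta (k : nzRingType) (g : nat) (a : 'I_g -> k) (m : 'I_g) :
  \sum_(j < g) a j * ((m : nat) == (j : nat))%:R = a m.
Proof.
rewrite (bigD1 m) //= eqxx mulr1 big1 ?addr0 // => j /negbTE hj.
by rewrite val_eqE eq_sym hj mulr0.
Qed.

Lemma Fcoord (k : nzRingType) (sigma : k -> k) (g : nat) (J : {set 'I_g}) (f : nat)
  (v : 'rV[k]_g) (m : 'I_g) :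
  (Fmap sigma J f v) 0 m = \sum_(j < g) sigma (v 0 j) *
     (if (f <= w0 J f j)%N then ((m : nat) == (w0 J f j - f)%N)%:R else 0).
Proof.
rewrite /Fmap summxE; apply: eq_bigr => j _; rewrite mxE.
by case: ifP => _; rewrite !mxE.
Qed.

Lemma Vcoord (k : nzRingType) (sigma : k -> k) (g : nat) (J : {set 'I_g}) (f fs : nat)
  (v : 'rV[k]_g) (m : 'I_g) :
  (Vmap sigma J f fs v) 0 m = \sum_(j < g) sigma (v 0 j) *
     (if (w0 J f j < f)%N then ((m : nat) == (fs + w0 J f j)%N)%:R else 0).
Proof.
rewrite /Vmap summxE; apply: eq_bigr => j _; rewrite mxE.
by case: ifP => _; rewrite !mxE.
Qed.

Lemma card_lt (g j : nat) : (j <= g)%N -> #|[set x : 'I_g | (x < j)%N]| = j.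
Proof.
move=> hj; rewrite -sum1_card.
rewrite (eq_bigl (fun x : 'I_g => (x < j)%N)); last by move=> x; rewrite inE.
rewrite -(big_ord_widen_cond g (fun _ => true) (fun _ => 1%N) hj) /=.
by rewrite sum1_card card_ord.
Qed.

Lemma card_lt_le (g j : nat) : (#|[set x : 'I_g | (x < j)%N]| <= j)%N.
Proof.
case: (leqP j g) => h; first by rewrite card_lt.
apply: leq_trans (ltnW h); rewrite -[X in (_ <= X)%N]card_ord; exact: max_card.
Qed.

Lemma w0_in (g : nat) (J : {set 'I_g}) (f : nat) (j : 'I_g) :
  #|J| = f -> j \in J -> (w0 J f j < f)%N.
Proof.
move=> hJ hj; rewrite /w0 hj -hJ; apply: proper_card.
apply/properP; split; first by apply/subsetP => x; rewrite inE => /andP[].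
by exists j => //; rewrite inE ltnn andbF.
Qed.

Definition cnt (g : nat) (J : {set 'I_g}) (r : nat) :=
  #|[set x : 'I_g | (x \notin J) && (x < r)%N]|.

Lemma cnt_le g (J : {set 'I_g}) r : (cnt J r <= r)%N.
Proof.
apply: leq_trans (card_lt_le g r); apply: subset_leq_card.
by apply/subsetP => x; rewrite !inE => /andP[].
Qed.

Lemma cnt_full g (J : {set 'I_g}) d : (d <= g)%N -> cnt J d = d ->
  forall x : 'I_g, (x < d)%N -> x \notin J.
Proof.
move=> hd hc x hx.
have hsub : [set x : 'I_g | (x \notin J) && (x < d)%N] \subset [set x : 'I_g | (x < d)%N].
  by apply/subsetP => y; rewrite !inE => /andP[].
have := subset_cardP _ hsub; rewrite card_lt // => /(_ hc) heq.
have : x \in [set x : 'I_g | (x < d)%N] by rewrite inE.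
by rewrite -heq inE => /andP[].
Qed.

Lemma UF (k : nzRingType) (sigma : k -> k) g (J : {set 'I_g}) f r (v : 'rV[k]_g) :
  sigma 0 = 0 -> #|J| = f -> (forall m : 'I_g, (r <= m)%N -> v 0 m = 0) ->
  forall m : 'I_g, (cnt J r <= m)%N -> (Fmap sigma J f v) 0 m = 0.
Proof.
move=> s0 hJ hv m hm; rewrite Fcoord big1 // => j _.
case: (leqP r j) => hj; first by rewrite hv // s0 mul0r.
case: ifP => hf; last by rewrite mulr0.
have hjJ : j \notin J by apply/negP => /(w0_in hJ); rewrite ltnNge hf.
have : (w0 J f j - f < cnt J r)%N.
  rewrite /w0 (negbTE hjJ) addKn; apply: proper_card; apply/properP; split.
    by apply/subsetP => x; rewrite !inE => /andP[-> /ltn_trans ->].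
  by exists j; rewrite !inE ?hjJ ?hj ?ltnn ?andbF.
move=> hlt; case: eqP => [he|]; last by rewrite mulr0.
by move: hm; rewrite he leqNgt hlt.
Qed.

Lemma LF (k : nzRingType) (sigma : k -> k) g (J : {set 'I_g}) f d (v : 'rV[k]_g) :
  sigma 0 = 0 -> #|J| = f -> (forall x : 'I_g, (x < d)%N -> x \notin J) ->
  (forall m : 'I_g, (d <= m)%N -> v 0 m = 0) ->
  forall m : 'I_g, (Fmap sigma J f v) 0 m = sigma (v 0 m).
Proof.
move=> s0 hJ hd hv m; rewrite Fcoord -[RHS](sum_delta (fun j => sigma (v 0 j)) m).
apply: eq_bigr => j _.
case: (leqP d j) => hj; first by rewrite hv // s0 !mul0r.
have hjJ := hd j hj.
have -> : w0 J f j = (f + j)%N.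
  rewrite /w0 (negbTE hjJ); congr (_ + _)%N.
  rewrite -[RHS](@card_lt g j (ltnW (ltn_ord j))); apply: eq_card => x.
  rewrite !inE; case: (ltnP x j) => hx; rewrite ?andbF ?andbT //.
  exact: hd (ltn_trans hx hj).
by rewrite leq_addr addKn.
Qed.

Lemma LFV (k : nzRingType) (sigma sigmaV : k -> k) g (J : {set 'I_g}) f fs (v : 'rV[k]_g) :
  (f + fs)%N = g -> maximal_w J f fs ->
  forall m : 'I_g, (Fmap sigma J f v + Vmap sigmaV J f fs v) 0 m =
     if (m < fs)%N then sigma (v 0 m) else sigmaV (v 0 m).
Proof.
move=> hg hmax m; rewrite mxE Fcoord Vcoord -big_split /=.
rewrite -[RHS](sum_delta (fun j => if (j < fs)%N then sigma (v 0 j) else sigmaV (v 0 j)) m).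
apply: eq_bigr => j _; have [h1 h2] := hmax j.
case: (ltnP j fs) => hj.
  rewrite (h1 hj) leq_addr addKn ltnNge leq_addr /= mulr0 addr0.
  by [].
rewrite (h2 hj).
have hlt : (j - fs < f)%N by rewrite ltn_subLR // addnC hg.
by rewrite leqNgt hlt /= mulr0 add0r subnKC.
Qed.

Lemma MAX g (J : {set 'I_g}) f fs :
  (forall x : 'I_g, (x < fs)%N -> x \notin J) -> #|J| = f -> (f + fs)%N = g ->
  maximal_w J f fs.
Proof.
move=> hd hJ hg.
have hC : ~: J = [set x : 'I_g | (x < fs)%N].
  apply/esym/eqP; rewrite eqEcard; apply/andP; split.
    by apply/subsetP => x; rewrite !inE => /hd.
  by rewrite cardsCs setCK card_ord hJ card_lt -hg ?leq_addl // addKn.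
have hin : forall x : 'I_g, (x \in J) = (fs <= x)%N.
  by move=> x; rewrite -[x \in J]negbK -in_setC hC inE -leqNgt.
move=> j; split => hj.
  rewrite /w0 hin leqNgt hj /=; congr (_ + _)%N.
  rewrite -[RHS](@card_lt g j (ltnW (ltn_ord j))); apply: eq_card => x.
  rewrite !inE -in_setC hC inE; case: (ltnP x j) => hx; rewrite ?andbF ?andbT //.
  exact: ltn_trans hx hj.
rewrite /w0 hin hj.
have -> : [set x in J | (x < j)%N] =
   [set x : 'I_g | (x < j)%N] :\: [set x : 'I_g | (x < fs)%N].
  by apply/setP => x; rewrite !inE hin -leqNgt andbC.
rewrite cardsD card_lt ?(ltnW (ltn_ord j)) //.
rewrite (setIidPr _) ?card_lt //.
  by apply: leq_trans hj (ltnW (ltn_ord j)).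
by apply/subsetP => x; rewrite !inE => h; exact: leq_trans h hj.
Qed.

Lemma rank_bound (k : fieldType) (d g : nat) (A : 'M[k]_(d, g)) (X : {set 'I_g}) :
  row_free A -> (forall a m, m \notin X -> A a m = 0) -> (d <= #|X|)%N.
Proof.
move=> hA h0.
pose E : 'M[k]_(#|X|, g) := \matrix_(i, m) ((m == enum_val i)%:R).
pose B : 'M[k]_(d, #|X|) := \matrix_(a, i) A a (enum_val i).
have eqA : A = B *m E.
  apply/matrixP => a m; rewrite !mxE.
  case: (boolP (m \in X)) => hm.
    rewrite (bigD1 (enum_rank_in hm m)) //= !mxE enum_rankK_in // eqxx mulr1.
    rewrite big1 ?addr0 // => i hi; rewrite !mxE.
    case: eqP => [he|]; last by rewrite mulr0.
    by have := enum_valK_in hm i; rewrite -he => hh; move: hi; rewrite hh eqxx.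
  rewrite h0 // big1 // => i _; rewrite !mxE.
  case: eqP => [he|]; last by rewrite mulr0.
  by move: hm; rewrite he enum_valP.
have := mxrankM_maxr B E; rewrite -eqA.
move: hA; rewrite /row_free => /eqP ->.
move/leq_trans; apply; exact: rank_leq_row.
Qed.

Lemma iter_ordS (l : nat) (tau : 'I_l) n :
  val (iter n (@ordS l) tau) = ((tau + n) %% l)%N.
Proof.
elim: n => [|n IH] /=; first by rewrite addn0 modn_small.
by rewrite /ordS /= IH -addn1 modnDml addn1 addnS.
Qed.

Lemma orbit_all (l : nat) (tau t : 'I_l) : exists2 n, (n < l)%N & iter n (@ordS l) tau = t.
Proof.
have hl : (0 < l)%N by apply: leq_ltn_trans (ltn_ord tau).
exists ((t + l - tau) %% l)%N; first by rewrite ltn_mod.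
apply: val_inj; rewrite iter_ordS /= modnDmr addnBA; last first.
  by apply: leq_trans (ltnW (ltn_ord tau)) (leq_addl _ _).
by rewrite addKn modnDr modn_small.
Qed.

Lemma root_exists (k : closedFieldType) (p : nat) (a : k) : (0 < p)%N ->
  exists x : k, x ^+ p = a.
Proof.
move=> hp.
have [x hx] := @solve_monicpoly k p (fun i => if i == 0%N then a else 0) hp.
exists x; rewrite hx; case: p hp {hx} => // p _.
by rewrite big_ord_recl /= expr0 mulr1 big1 ?addr0 // => i _; rewrite mul0r.
Qed.

Fixpoint rseq (g l : nat) (J : 'I_l -> {set 'I_g}) (fs : 'I_l -> nat) (tau : 'I_l) n :=
  match n with
  | 0 => g
  | S n => if (fs tau <= fs (iter n (@ordS l) tau))%N
           then cnt (J (iter n (@ordS l) tau)) (rseq J fs tau n)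
           else rseq J fs tau n
  end.

Lemma rseq_le g l (J : 'I_l -> {set 'I_g}) fs tau n :
  (rseq J fs tau n.+1 <= rseq J fs tau n)%N.
Proof. by rewrite /=; case: ifP => // _; exact: cnt_le. Qed.

Lemma rseq_mono g l (J : 'I_l -> {set 'I_g}) fs tau n m : (n <= m)%N ->
  (rseq J fs tau m <= rseq J fs tau n)%N.
Proof.
elim: m => [|m IH]; first by rewrite leqn0 => /eqP ->.
rewrite leq_eqVlt => /orP[/eqP -> //|hn].
exact: leq_trans (rseq_le _ _ _ _) (IH hn).
Qed.

Lemma Rup (k : nzRingType) (sigma sigmaV : k -> k) (g l : nat)
  (f fs : 'I_l -> nat) (hffs : forall t, (f t + fs t)%N = g)
  (J : 'I_l -> {set 'I_g}) (hJ : forall t, #|J t| = f t) (tau : 'I_l) :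
  sigma 0 = 0 -> sigmaV 0 = 0 ->
  (forall t, (fs t < fs tau)%N -> maximal_w (J t) (f t) (fs t)) ->
  forall n v, Himg sigma sigmaV J f fs tau n v ->
  forall m : 'I_g, (rseq J fs tau n <= m)%N -> v 0 m = 0.
Proof.
move=> s0 sV0 hb; elim=> [|n IH] v /=.
  by move=> _ m; rewrite leqNgt ltn_ord.
move=> [u [hu ->]] m; rewrite /Hmap /=.
case: ifP => hle hm.
  by apply: (UF s0 (hJ _) (IH u hu)).
have hlt : (fs (iter n (@ordS l) tau) < fs tau)%N by rewrite ltnNge hle.
rewrite (LFV _ _ _ (hffs _) (hb _ hlt)).
by case: ifP => _; rewrite (IH u hu) // ?s0 ?sV0.
Qed.

Lemma Rlow (k : nzRingType) (sigma sigmaV s sV : k -> k)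
  (hs : forall a, sigma (s a) = a) (hsV : forall a, sigmaV (sV a) = a)
  (g l : nat)
  (f fs : 'I_l -> nat) (hffs : forall t, (f t + fs t)%N = g)
  (J : 'I_l -> {set 'I_g}) (hJ : forall t, #|J t| = f t) (tau : 'I_l) :
  sigma 0 = 0 -> sigmaV 0 = 0 ->
  (forall t, (fs t < fs tau)%N -> maximal_w (J t) (f t) (fs t)) ->
  forall n, (forall n', (n' < n)%N -> (fs tau <= fs (iter n' (@ordS l) tau))%N ->
     forall x : 'I_g, (x < fs tau)%N -> x \notin J (iter n' (@ordS l) tau)) ->
  forall v : 'rV[k]_g, (forall m : 'I_g, (fs tau <= m)%N -> v 0 m = 0) ->
  Himg sigma sigmaV J f fs tau n v.
Proof.
move=> s0 sV0 hb; elim=> [|n IH] hgood v hv //=.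
have IH' := IH (fun n' hn' => hgood n' (ltnW hn')).
set t := iter n (@ordS l) tau.
case: (leqP (fs tau) (fs t)) => hle.
  pose w : 'rV[k]_g := \row_m (if (m < fs tau)%N then s (v 0 m) else 0).
  have hw : forall m : 'I_g, (fs tau <= m)%N -> w 0 m = 0.
    by move=> m hm; rewrite mxE ltnNge hm.
  exists w; split; first exact: IH'.
  rewrite /Hmap /= -/t hle; apply/rowP => m.
  rewrite (LF s0 (hJ _) (hgood n (ltnSn n) hle) hw) mxE.
  by case: ltnP => hm; rewrite ?hs // hv // s0.
pose w : 'rV[k]_g := \row_m (if (m < fs tau)%N then
   (if (m < fs t)%N then s (v 0 m) else sV (v 0 m)) else 0).
have hw : forall m : 'I_g, (fs tau <= m)%N -> w 0 m = 0.
  by move=> m hm; rewrite mxE ltnNge hm.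
exists w; split; first exact: IH'.
rewrite /Hmap /= -/t leqNgt hle /=; apply/rowP => m.
rewrite (LFV _ _ _ (hffs _) (hb _ hle)) mxE.
case: (ltnP m (fs tau)) => hm.
  by case: (ltnP m (fs t)) => _; rewrite ?hs ?hsV.
by rewrite hv // ; case: ifP; rewrite ?s0 ?sV0.
Qed.

Theorem proposition4p5
  (k : closedFieldType) (p : nat) (hp : prime p) (hchar : p \in [pchar k])
  (sigmaV : {rmorphism k -> k}) (hsV : bijective sigmaV)
  (g l : nat) (hg : (0 < g)%N) (hl : (0 < l)%N)
  (f fs : 'I_l -> nat) (hffs : forall t, (f t + fs t)%N = g)
  (J : 'I_l -> {set 'I_g}) (hJ : forall t, #|J t| = f t)
  (tau : 'I_l) :
  let sigma := fun x : k => x ^+ p in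
  let img := Himg sigma sigmaV J f fs tau in
  dim_is (fun u => exists v, img l v /\ u = proj (J tau) v) (fs tau) ->
  (forall t, (fs t < fs tau)%N -> maximal_w (J t) (f t) (fs t)) ->
  [/\ (forall i, (i < l)%N -> forall v : 'rV[k]_g,
          img i.+1 v <-> (forall m : 'I_g, (fs tau <= m)%N -> v 0 m = 0)),
      maximal_w (J tau) (f tau) (fs tau) &
      (forall t, fs t = fs tau -> maximal_w (J t) (f t) (fs t))].
Proof.
move=> sigma img [A [hA hS]] hb.
have hp0 : (0 < p)%N := prime_gt0 hp.
have s0 : sigma 0 = 0 by rewrite /sigma expr0n eqn0Ngt hp0.
have sV0 : sigmaV 0 = 0 := rmorph0 _.
have ex : forall a : k, exists x : k, x ^+ p == a.
  by move=> a; have [x hx] := root_exists a hp0; exists x; apply/eqP.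
pose s (a : k) := xchoose (ex a).
have hs : forall a, sigma (s a) = a by move=> a; apply/eqP; exact: (xchooseP (ex a)).
case: hsV => sVi _ hsVi.
set d := fs tau.
have hdg : (d <= g)%N by rewrite -(hffs tau) leq_addl.
pose R := rseq J fs tau.
have R1 : R 1%N = d.
  rewrite /R /= leqnn /cnt.
  have -> : [set x : 'I_g | (x \notin J tau) && (x < g)%N] = ~: J tau.
    by apply/setP => x; rewrite !inE ltn_ord andbT.
  apply/(@addnI (f tau)); rewrite hffs -(hJ tau) cardsC card_ord //.
pose X := [set x : 'I_g | (x \notin J tau) && (x < R l)%N].
have hrow : forall a m, m \notin X -> A a m = 0.
  move=> a m hm.
  have : (fun u => exists v, img l v /\ u = proj (J tau) v) (row a A).
    by apply/hS; exact: row_sub.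
  case=> u [hu he].
  have := congr1 (fun M : 'rV[k]_g => M 0 m) he; rewrite mxE => ->.
  rewrite /proj mxE; move: hm; rewrite inE negb_and negbK -leqNgt.
  case/orP => [-> //|hm']; case: ifP => // _.
  exact: (Rup hffs hJ s0 sV0 hb hu hm').
have hdX := rank_bound hA hrow.
have hR1l : (R l <= d)%N by rewrite -R1; exact: rseq_mono.
have hRl : R l = d.
  apply/anti_leq; rewrite hR1l /=; apply: leq_trans hdX _; exact: cnt_le.
have hcnt : cnt (J tau) d = d.
  apply/anti_leq; rewrite cnt_le /=; move: hdX; rewrite /X hRl; exact.
have hRn : forall n, (0 < n)%N -> (n <= l)%N -> R n = d.
  move=> n h0 h1; apply/anti_leq; rewrite -{1}R1 rseq_mono //=.
  by rewrite -{1}hRl rseq_mono.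
have good : forall n, (n < l)%N -> (fs tau <= fs (iter n (@ordS l) tau))%N ->
     forall x : 'I_g, (x < fs tau)%N -> x \notin J (iter n (@ordS l) tau).
  move=> [|n] hn hle.
    exact: cnt_full hdg hcnt.
  apply: cnt_full hdg _.
  have e : R n.+2 = if (d <= fs (iter n.+1 (@ordS l) tau))%N
     then cnt (J (iter n.+1 (@ordS l) tau)) (R n.+1) else R n.+1 by [].
  have := hRn n.+2 isT hn; rewrite e -/d in hle *; rewrite hle. have h1 := hRn n.+1 isT (ltnW hn). by rewrite h1.
split.
- move=> i hi v; split.
    move=> hv m hm; apply: (Rup hffs hJ s0 sV0 hb hv); by have := hRn i.+1 isT hi; rewrite /R => ->.
  move=> hv; apply: (Rlow hs hsVi hffs hJ s0 sV0 hb _ hv).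
  move=> n' hn'; apply: good; exact: leq_trans hn' hi.
- exact: MAX (good 0%N hl (leqnn _)) (hJ tau) (hffs tau).
- move=> t heq; have [n hn e] := orbit_all tau t.
  apply: MAX (hJ t) (hffs t) => x hx.
  have hx' : (x < fs tau)%N by rewrite -/d -heq.
  by have := good n hn; rewrite e heq leqnn => /(_ isT x hx').
Qed.
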